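(* For every $\bar y\in\mathcal P$ there exists a feasible assignment for $\bar y$, and if $\bar x$ is an optimal assignment w.r.t. $\bar y$ and $w'$, then $\mathrm{cost}_{w'}(\bar x,\bar y)\le T(\bar y)$.
   Context: Setting: $p\ge1$; a finite metric $d$ on $P\cup\mathcal F$; $f\ge0$; $w:P\to\mathbb{R}_{\ge0}$; matroid $\mathcal M$ on $\mathcal F$ with rank $r$. For demands $\omega$, $\mathrm{cost}_\omega(x,y)=\sum_u f(u)y_u+\sum_{v,u}\omega(v)d(v,u)^px_{vu}$; $\textsc{FacilityMatLP}(\omega,\mathcal M)$ minimizes it s.t. $\sum_u x_{vu}\ge1$, $\sum_{u\in S}y_u\le r(S)$ ($S\subseteq\mathcal F$), $0\le x_{vu}\le y_u$. Given $\bar y$, a feasible assignment is $x$ with $\sum_u x_{vu}\ge1$ and $0\le x_{vu}\le\bar y_u$; an optimal assignment minimizes $\sum_{v,u}\omega(v)d(v,u)^px_{vu}$ among these. $(x,y)$ is an optimal LP solution for $w$ with $\sum_u x_{vu}=1$; $\mathcal R(v)=(\sum_ud(v,u)^px_{vu})^{1/p}$. Client consolidation gives $w'$ (order clients by non-decreasing $\mathcal R$; for $i<j$, if $d(v_i,v_j)\le2^{(p+1)/p}\mathcal R(v_j)$ and $w'(v_i)>0$, move all of $w'(v_j)$ to $v_i$); $P'=\mathrm{supp}(w')$, $|P'|\ge2$. For $v\in P'$: $F(v)$ = facilities whose nearest client in $P'$ is $v$ (ties arbitrary, a partition of $\mathcal F$); $F'(v)=\{u\in F(v):d(u,v)\le2^{1/p}\mathcal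 R(v)\}$; $\gamma_v=\min_{u\notin F(v)}d(v,u)$; $G(v)=\{u\in F(v):d(v,u)\le\gamma_v\}$. $T(\bar y)=\sum_uf(u)\bar y_u+\sum_{v\in P'}w'(v)\big(\sum_{u\in G(v)}d(v,u)^p\bar y_u+3^p\gamma_v^p(1-\sum_{u\in G(v)}\bar y_u)\big)$. $\mathcal P=\{\bar y\in\mathbb{R}^{\mathcal F}_{\ge0}:\sum_{u\in S}\bar y_u\le r(S)\ \forall S\subseteq\mathcal F;\ \sum_{u\in F'(v)}\bar y_u\ge1/2\text{ and }\sum_{u\in G(v)}\bar y_u\le1\ \forall v\in P'\}$. *)

(* Defs.v *)
From HB Require Import structures.
From mathcomp Require Import all_boot all_order all_algebra.
From mathcomp Require Import reals exp.
Set Implicit Arguments. Unset Strict Implicit. Unset Printing Implicit Defensive.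
Import Order.TTheory GRing.Theory Num.Theory.
Local Open Scope ring_scope.

Section Defs.
Variables (R : realType) (X : finType).

Definition is_metric (d : X -> X -> R) : Prop :=
  [/\ forall a, d a a = 0,
      forall a b, d a b = 0 -> a = b,
      forall a b, d a b = d b a
    & forall a b c, d a c <= d a b + d b c].

Definition matroid (F : {set X}) (indep : {set X} -> bool) : Prop :=
  [/\ indep set0,
      forall A : {set X}, indep A -> A \subset F,
      forall A B : {set X}, B \subset A -> indep A -> indep B
    & forall A B : {set X}, indep A -> indep B -> (#|A| < #|B|)%N ->
        exists2 x, x \in B :\: A & indep (x |: A)].

Definition rank (indep : {set X} -> bool) (S : {set X}) : nat :=
  \max_(I : {set X} | indep I && (I \subset S)) #|I|.

Definition cost (p : R) (d : X -> X -> R) (P F : {set X}) (f : X -> R)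
  (om : X -> R) (x : X -> X -> R) (y : X -> R) : R :=
  \sum_(u in F) f u * y u +
  \sum_(v in P) \sum_(u in F) om v * (d v u `^ p) * x v u.

Definition conn_cost (p : R) (d : X -> X -> R) (P F : {set X})
  (om : X -> R) (x : X -> X -> R) : R :=
  \sum_(v in P) \sum_(u in F) om v * (d v u `^ p) * x v u.

Definition lp_feasible (P F : {set X}) (indep : {set X} -> bool)
  (x : X -> X -> R) (y : X -> R) : Prop :=
  [/\ forall v, v \in P -> 1 <= \sum_(u in F) x v u,
      forall S : {set X}, S \subset F -> \sum_(u in S) y u <= (rank indep S)%:R
    & forall v u, v \in P -> u \in F -> 0 <= x v u /\ x v u <= y u].

Definition lp_optimal p d P F f indep (om : X -> R) x y : Prop :=
  lp_feasible P F indep x y /\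
  forall x' y', lp_feasible P F indep x' y' ->
    cost p d P F f om x y <= cost p d P F f om x' y'.

Definition feasible_assignment (P F : {set X}) (yb : X -> R) (x : X -> X -> R) : Prop :=
  (forall v, v \in P -> 1 <= \sum_(u in F) x v u) /\
  (forall v u, v \in P -> u \in F -> 0 <= x v u /\ x v u <= yb u).

Definition optimal_assignment p d (P F : {set X}) (om : X -> R) (yb : X -> R)
  (x : X -> X -> R) : Prop :=
  feasible_assignment P F yb x /\
  forall x', feasible_assignment P F yb x' ->
    conn_cost p d P F om x <= conn_cost p d P F om x'.

Definition Rad p d (F : {set X}) (x : X -> X -> R) (v : X) : R :=
  (\sum_(u in F) (d v u `^ p) * x v u) `^ (p^-1).

Definition move_weight (w : X -> R) (a b : X) : X -> R :=
  fun z => if z == a then 0 else if z == b then w b + w a else w z.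

(* Client consolidation, run along an ordering of the clients.
   consol_run thr pre rest w w' : having processed the clients of [pre]
   (in order), with current weights [w], processing [rest] in order yields
   [w']. *)
Inductive consol_run (d : X -> X -> R) (thr : X -> R) :
    seq X -> seq X -> (X -> R) -> (X -> R) -> Prop :=
  | consol_done pre w : consol_run d thr pre [::] w w
  | consol_move pre v rest w i w' :
      i \in pre -> d i v <= thr v -> 0 < w i ->
      consol_run d thr (rcons pre v) rest (move_weight w v i) w' ->
      consol_run d thr pre (v :: rest) w w'
  | consol_stay pre v rest w w' :
      (forall i, i \in pre -> d i v <= thr v -> w i <= 0) ->
      consol_run d thr (rcons pre v) rest w w' ->
      consol_run d thr pre (v :: rest) w w'.

Definition consolidation p d (P F : {set X}) (x : X -> X -> R) (w w' : X -> R) : Prop :=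
  exists s : seq X,
    [/\ uniq s, [set v in s] = P,
        sorted (fun a b => Rad p d F x a <= Rad p d F x b) s
      & consol_run d (fun v => 2 `^ ((p + 1) / p) * Rad p d F x v) [::] s w w'].

(* minimum of g over A (0 if A is empty; never used in that case) *)
Definition setmin (A : {set X}) (g : X -> R) : R :=
  match enum A with
  | [::] => 0
  | a :: s => foldr (fun u m => Num.min (g u) m) (g a) s
  end.

End Defs.

(* Main.v *)
Require Import Defs.
From HB Require Import structures.
From mathcomp Require Import all_boot all_order all_algebra.
From mathcomp Require Import reals exp.
From mathcomp Require Import boolp lra.
Import Order.TTheory GRing.Theory Num.Theory.
Local Open Scope ring_scope.

Section H.
Variables (R : realType) (X : finType).

Lemma foldmin_spec (g : X -> R) (a0 : X) (s : seq X) :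
  exists2 u, u \in a0 :: s &
    foldr (fun u m => Num.min (g u) m) (g a0) s = g u /\
    forall z, z \in a0 :: s -> g u <= g z.
Proof.
elim: s => [|b s [u us [e1 e2]]] /=.
  exists a0; first by rewrite inE.
  by split=> // z; rewrite inE => /eqP->.
rewrite e1; case: (lerP (g b) (g u)) => h.
  exists b; first by rewrite !inE eqxx orbT.
  split; first by rewrite ?min_l.
  move=> z; rewrite !inE => /or3P [/eqP->|/eqP->|zs].
  - by apply: le_trans h (e2 _ _); rewrite inE eqxx.
  - by [].
  - by apply: le_trans h (e2 _ _); rewrite inE zs orbT.
exists u.
  by move: us; rewrite !inE => /orP [->|->]; rewrite ?orbT.
split; first by rewrite ?min_r // ltW.
move=> z; rewrite !inE => /or3P [/eqP->|/eqP->|zs].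
- by apply: e2; rewrite inE eqxx.
- exact: ltW.
- by apply: e2; rewrite inE zs orbT.
Qed.

Lemma setmin_spec (A : {set X}) (g : X -> R) (a : X) : a \in A ->
  exists2 u, u \in A & setmin A g = g u /\ forall z, z \in A -> g u <= g z.
Proof.
move=> aA; rewrite /setmin.
have: a \in enum A by rewrite mem_enum.
case E: (enum A) => [|a0 s] //= _.
have [u us [e1 e2]] := foldmin_spec g a0 s.
exists u; first by rewrite -mem_enum E.
split=> // z zA; apply: e2; by rewrite -E mem_enum.
Qed.

Lemma sum_split2 (F A B : {set X}) (g h : X -> R) :
  A \subset F -> B \subset F -> [disjoint A & B] ->
  \sum_(u in F) (if u \in A then g u else if u \in B then h u else 0) =
  \sum_(u in A) g u + \sum_(u in B) h u.
Proof.
move=> /subsetP AF /subsetP BF dAB.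
rewrite (big_mkcond (fun u => u \in A)) (big_mkcond (fun u => u \in B)) -big_split.
rewrite big_mkcond; apply: eq_bigr => u _ /=.
case uA: (u \in A).
  rewrite (AF u uA); case uB: (u \in B); last by rewrite addr0.
  by move: dAB; rewrite disjoint_subset => /subsetP /(_ u uA); rewrite inE uB.
case uB: (u \in B); first by rewrite (BF u uB) add0r.
by rewrite addr0; case: (u \in F).
Qed.

Lemma sum_sub_le (A B : {set X}) (g : X -> R) :
  A \subset B -> (forall u, u \in B -> 0 <= g u) ->
  \sum_(u in A) g u <= \sum_(u in B) g u.
Proof.
move=> /subsetP AB g0.
rewrite (big_mkcond (fun u => u \in A)) (big_mkcond (fun u => u \in B)).
apply: ler_sum => u _.
case uA: (u \in A); first by rewrite (AB u uA).
by case uB: (u \in B) => //; apply: g0.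
Qed.

Lemma consol_nonneg d thr pre rest (w w' : X -> R) :
  consol_run d thr pre rest w w' ->
  (forall z, z \in pre ++ rest -> 0 <= w z) ->
  forall z, z \in pre ++ rest -> 0 <= w' z.
Proof.
elim=> {pre rest w w'} //.
- move=> pre v rest w i w' ipre _ wi _ IH h z zin.
  rewrite -cat_rcons in zin; apply: IH zin => z'; rewrite cat_rcons => z'in.
  rewrite /move_weight; case: ifP => // _; case: ifP => _; last exact: h.
  apply: addr_ge0; first by apply: h; rewrite mem_cat ipre.
  by apply: h; rewrite mem_cat inE eqxx orbT.
- move=> pre v rest w w' _ _ IH h z zin.
  rewrite -cat_rcons in zin; apply: IH zin => z'; rewrite cat_rcons; exact: h.
Qed.

Lemma consol_zero d thr pre rest (w w' : X -> R) :
  consol_run d thr pre rest w w' ->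
  forall z, z \in pre -> w z <= 0 -> w' z <= 0.
Proof.
elim=> {pre rest w w'} //.
- move=> pre v rest w i w' ipre _ wi _ IH z zin wz.
  apply: IH; first by rewrite mem_rcons inE zin orbT.
  rewrite /move_weight; case: ifP => // _; case: ifP => [/eqP ez|_] //.
  by move: wi; rewrite -ez ltNge wz.
- move=> pre v rest w w' _ _ IH z zin wz.
  by apply: IH => //; rewrite mem_rcons inE zin orbT.
Qed.

Lemma consol_sep d thr pre rest (w w' : X -> R) (x0 : X) :
  consol_run d thr pre rest w w' ->
  forall i j, (i < j)%N -> (size pre <= j)%N -> (j < size (pre ++ rest))%N ->
  0 < w' (nth x0 (pre ++ rest) i) -> 0 < w' (nth x0 (pre ++ rest) j) ->
  thr (nth x0 (pre ++ rest) j) < d (nth x0 (pre ++ rest) i) (nth x0 (pre ++ rest) j).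
Proof.
elim=> {pre rest w w'}.
- move=> pre w i j _ h1 h2; by rewrite cats0 in h2; move: (leq_trans h2 h1); rewrite ltnn.
- move=> pre v rest w i0 w' ipre _ wi R0 IH i j ij h1 h2 wa wb.
  case: (ltngtP (size pre) j) => hj; last first.
  + move: wb; rewrite nth_cat -hj ltnn subnn /=.
    have := @consol_zero _ _ _ _ _ _ R0 v; rewrite mem_rcons inE eqxx /move_weight eqxx.
    by move=> /(_ isT (lexx 0)) h3 h4; move: (lt_le_trans h4 h3); rewrite ltxx.
  + by move: hj; rewrite ltnNge h1.
  + rewrite -cat_rcons; apply: IH; rewrite ?cat_rcons ?size_rcons //.
- move=> pre v rest w w' hst R0 IH i j ij h1 h2 wa wb.
  case: (ltngtP (size pre) j) => hj; last first.
  + have ipre : (i < size pre)%N by rewrite hj.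
    move: wa wb; rewrite !nth_cat ipre -hj ltnn subnn /= => wa wb.
    rewrite ltNge; apply/negP => dle.
    have := hst _ (mem_nth x0 ipre) dle => wle.
    have := @consol_zero _ _ _ _ _ _ R0 (nth x0 pre i).
    rewrite mem_rcons inE (mem_nth x0 ipre) orbT => /(_ isT wle).
    by rewrite leNgt wa.
  + by move: hj; rewrite ltnNge h1.
  + rewrite -cat_rcons; apply: IH; rewrite ?cat_rcons ?size_rcons //.
Qed.

End H.
Arguments consol_nonneg {R X d thr pre rest w w'}.
Arguments consol_zero {R X d thr pre rest w w'}.
Arguments consol_sep {R X d thr pre rest w w'} x0.
Arguments setmin_spec {R X A} g {a}.
Arguments sum_split2 {R X F A B} g h.
Arguments sum_sub_le {R X A B g}.
Arguments foldmin_spec {R X}.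

Theorem mainTheorem14 (R : realType) (X : finType) (p : R)
  (d : X -> X -> R) (P F : {set X}) (f w : X -> R)
  (indep : {set X} -> bool) (x : X -> X -> R) (y : X -> R)
  (w' : X -> R) (near : X -> X) :
  1 <= p ->
  is_metric d ->
  P :|: F = [set: X] ->
  (forall u, u \in F -> 0 <= f u) ->
  (forall v, v \in P -> 0 <= w v) ->
  matroid F indep ->
  lp_optimal p d P F f indep w x y ->
  (forall v, v \in P -> \sum_(u in F) x v u = 1) ->
  consolidation p d P F x w w' ->
  let P' := [set v in P | w' v != 0] in
  (2 <= #|P'|)%N ->
  (* F(v): facilities whose nearest client in P' is v (any tie-breaking) *)
  (forall u, u \in F -> near u \in P' /\ forall v, v \in P' -> d u (near u) <= d u v) ->
  let Fv := fun v => [set u in F | near u == v] in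
  let Fv' := fun v => [set u in Fv v | d u v <= 2 `^ (p^-1) * Rad p d F x v] in
  let gam := fun v => setmin (F :\: Fv v) (fun u => d v u) in
  let G := fun v => [set u in Fv v | d v u <= gam v] in
  let T := fun yb : X -> R =>
    \sum_(u in F) f u * yb u +
    \sum_(v in P') w' v * (\sum_(u in G v) (d v u `^ p) * yb u +
                          (3 `^ p) * (gam v `^ p) * (1 - \sum_(u in G v) yb u)) in
  forall yb : X -> R,
    (forall u, u \in F -> 0 <= yb u) ->
    (forall S : {set X}, S \subset F -> \sum_(u in S) yb u <= (rank indep S)%:R) ->
    (forall v, v \in P' -> 1 / 2 <= \sum_(u in Fv' v) yb u /\ \sum_(u in G v) yb u <= 1) ->
    (exists xb, feasible_assignment P F yb xb) /\
    (forall xb, optimal_assignment p d P F w' yb xb ->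
       cost p d P F f w' xb yb <= T yb).
Proof.
move=> hp1 [d0 dsep dsym dtri] hPF hf hw hM hopt hx [s [us Ps srt run]] P' hP2 hnear
  Fv Fv' gam G T yb yb0 hrank hP'.
have p0 : 0 < p by apply: lt_le_trans hp1; rewrite ltr01.
have dge0 : forall a b, 0 <= d a b.
  by move=> a b; have := dtri a b a; rewrite d0 (dsym b a) => h; lra.
have inP : forall v, (v \in P) = (v \in s) by move=> v; rewrite -Ps inE.
have w'0 : forall v, v \in P -> 0 <= w' v.
  move=> v; rewrite inP => vs.
  apply: (consol_nonneg run) => // z zs; apply: hw; by rewrite inP.
have inP' : forall v, (v \in P') = (v \in P) && (w' v != 0) by move=> v; rewrite inE.
have w'pos : forall v, v \in P' -> 0 < w' v.
  by move=> v; rewrite inP' => /andP [vP wv]; rewrite lt_def wv w'0.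
set c := 2 `^ p^-1.
have c0 : 0 < c by apply: powR_gt0; rewrite ltr0n.
have thrE : 2 `^ ((p+1)/p) = 2 * c.
  rewrite mulrDl divff ?gt_eqF // mul1r powRD; last by apply/implyP => _; rewrite pnatr_eq0.
  by rewrite powRr1 // ler0n.
set Rd := Rad p d F x.
have sep : forall a b, a \in P' -> b \in P' -> a != b ->
    (2 * c * Rd b < d a b /\ Rd a <= Rd b) \/ (2 * c * Rd a < d b a /\ Rd b <= Rd a).
  move=> a b aP bP ab.
  have aS : a \in s by rewrite -inP; move: aP; rewrite inP' => /andP [].
  have bS : b \in s by rewrite -inP; move: bP; rewrite inP' => /andP [].
  have tr : transitive (fun a b => Rd a <= Rd b).
    by move=> m l n h1 h2; apply: le_trans h1 h2.
  have ia : (index a s < size s)%N by rewrite index_mem.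
  have ib : (index b s < size s)%N by rewrite index_mem.
  have ia' : index a s \in [pred n | (n < size s)%N] by rewrite inE.
  have ib' : index b s \in [pred n | (n < size s)%N] by rewrite inE.
  case: (ltngtP (index a s) (index b s)) => hab.
  - left; split.
      have := consol_sep a run (index a s) (index b s) hab (leq0n _) ib.
      rewrite /= !nth_index // thrE => h; apply: h; exact: w'pos.
    by have := sorted_ltn_nth tr a srt _ _ ia' ib' hab; rewrite !nth_index.
  - right; split.
      have := consol_sep a run (index b s) (index a s) hab (leq0n _) ia.
      rewrite /= !nth_index // thrE => h; apply: h; exact: w'pos.
    by have := sorted_ltn_nth tr a srt _ _ ib' ia' hab; rewrite !nth_index.
  - by move: ab; rewrite -(nth_index a aS) hab nth_index ?eqxx.
have row : forall v, exists r : X -> R, v \in P' ->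
   [/\ forall u, u \in F -> 0 <= r u /\ r u <= yb u,
       \sum_(u in F) r u = 1 &
       \sum_(u in F) d v u `^ p * r u <= \sum_(u in G v) (d v u `^ p) * yb u +
          (3 `^ p) * (gam v `^ p) * (1 - \sum_(u in G v) yb u)].
  move=> v; case vP: (v \in P'); last by exists (fun=> 0).
  have [v2 v2P' v2v] : exists2 v2, v2 \in P' & v2 != v.
    have : (0 < #|P' :\ v|)%N by rewrite (cardsD1 v P') vP add1n ltnS in hP2.
    by case/card_gt0P => v2; rewrite in_setD1 => /andP [h1 h2]; exists v2.
  have [u2 u2in] : exists u2, u2 \in Fv' v2.
    apply/set0Pn; apply/negP => /eqP e; have := (hP' v2 v2P').1.
    rewrite e big_set0; lra.
  have u2D : u2 \in F :\: Fv v.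
    by move: u2in; rewrite /Fv' /Fv !inE => /andP [/andP [-> /eqP ->] _]; rewrite v2v.
  have [ust usD [gE gmin]] := setmin_spec (fun u => d v u) u2D.
  have gamE : gam v = d v ust by [].
  have [ustF nv] : ust \in F /\ near ust != v.
    by move: usD; rewrite in_setD => /andP [h1 h2]; move: h1; rewrite /Fv inE h2 /=.
  set v3 := near ust.
  have [v3P' v3min] := hnear ust ustF.
  have dusv3 : d ust v3 <= gam v by rewrite gamE (dsym v ust); apply: v3min.
  have dvv3 : d v v3 <= 2 * gam v.
    by apply: le_trans (dtri v ust v3) _; rewrite -gamE; lra.
  have gam0 : 0 <= gam v by rewrite gamE.
  have [cv cv3] : c * Rd v < gam v /\ c * Rd v3 < gam v.
    case: (sep v3 v v3P' vP nv) => [[h1 h2]|[h1 h2]].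
    - have h3 : c * Rd v3 <= c * Rd v by rewrite ler_wpM2l // ltW.
      rewrite (dsym v3 v) -mulrA in h1; split; lra.
    - have h3 : c * Rd v <= c * Rd v3 by rewrite ler_wpM2l // ltW.
      rewrite -mulrA in h1; split; lra.
  have AF : G v \subset F.
    by apply/subsetP => u; rewrite /G /Fv !inE => /andP [/andP [-> _] _].
  have BF : Fv' v3 \subset F.
    by apply/subsetP => u; rewrite /Fv' /Fv !inE => /andP [/andP [-> _] _].
  have dAB : [disjoint G v & Fv' v3].
    rewrite -setI_eq0; apply/eqP/setP => u; rewrite /G /Fv' /Fv !inE.
    apply/negP => /andP [/andP [/andP [_ /eqP h1] _] /andP [/andP [_ /eqP h2] _]].
    by move: nv; rewrite -/v3 -h2 h1 eqxx.
  have sub' : Fv' v \subset G v.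
    apply/subsetP => u; rewrite /G /Fv' !inE => /andP [-> h] /=.
    rewrite (dsym v u); apply: le_trans h _; exact: ltW.
  set sA := \sum_(u in G v) yb u.
  set sB := \sum_(u in Fv' v3) yb u.
  have sB1 : 1 / 2 <= sB := (hP' v3 v3P').1.
  have sA1 : sA <= 1 := (hP' v vP).2.
  have sA2 : 1 / 2 <= sA.
    apply: le_trans (hP' v vP).1 _; apply: sum_sub_le sub' _ => u uG.
    by apply: yb0; move/subsetP: AF; apply.
  have sB0 : 0 < sB by lra.
  set al := (1 - sA) / sB.
  have al0 : 0 <= al by apply: divr_ge0; lra.
  have al1 : al <= 1 by rewrite ler_pdivrMr //; lra.
  exists (fun u => if u \in G v then yb u else if u \in Fv' v3 then al * yb u else 0) => _.
  split.
  - move=> u uF; have := yb0 u uF => h.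
    case: ifP => _; first by split.
    case: ifP => _; last by split.
    split; nra.
  - have := sum_split2 (fun u => yb u) (fun u => al * yb u) AF BF dAB; rewrite /= => ->.
    rewrite -mulr_sumr -/sA -/sB /al divfK ?gt_eqF //; lra.
  - have -> : \sum_(u in F) d v u `^ p *
        (if u \in G v then yb u else if u \in Fv' v3 then al * yb u else 0) =
        \sum_(u in F) (if u \in G v then d v u `^ p * yb u else
           if u \in Fv' v3 then d v u `^ p * (al * yb u) else 0).
      by apply: eq_bigr => u _; case: ifP => _ //; case: ifP => _ //; rewrite mulr0.
    have := sum_split2 (fun u => d v u `^ p * yb u) (fun u => d v u `^ p * (al * yb u))
      AF BF dAB; rewrite /= => ->.
    rewrite lerD2l.
    apply: (@le_trans _ _ (\sum_(u in Fv' v3) (3 * gam v) `^ p * (al * yb u))).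
      apply: ler_sum => u uB.
      have ybu : 0 <= yb u by apply: yb0; move/subsetP: BF; apply.
      apply: ler_wpM2r; first exact: mulr_ge0.
      have hdu : d v u <= 3 * gam v.
        move: uB; rewrite /Fv' /Fv !inE => /andP [/andP [_ /eqP hn] hd].
        have h1 := dtri v ust u.
        have h2 := dtri ust v3 u.
        rewrite (dsym v3 u) in h2; rewrite -/c -/Rd in hd.
        rewrite -gamE in h1; lra.
      apply: ge0_ler_powR => //; rewrite ?nnegrE ?dge0 //.
      - exact: ltW.
      - by apply: mulr_ge0; rewrite ?ler0n.
    rewrite -mulr_sumr -mulr_sumr -/sB /al divfK ?gt_eqF // powRM ?ler0n //.
case: (choice row) => rf rfP.
have [v0 v0P] : exists v0, v0 \in P'.
  by apply/card_gt0P; apply: leq_trans hP2.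
pose sel := fun v => if v \in P' then v else v0.
have selP : forall v, sel v \in P' by move=> v; rewrite /sel; case: ifP.
pose xb0 := fun v u => rf (sel v) u.
have feas : feasible_assignment P F yb xb0.
  split.
    by move=> v _; case: (rfP _ (selP v)) => _ -> _.
  by move=> v u _ uF; case: (rfP _ (selP v)) => h _ _; apply: h.
split; first by exists xb0.
move=> xb [_ xbopt]; have := xbopt xb0 feas.
rewrite /cost /T lerD2l => h; apply: le_trans h _; rewrite /conn_cost.
rewrite (big_mkcond (fun v => v \in P)) (big_mkcond (fun v => v \in P')) /=.
apply: ler_sum => v _.
case vP': (v \in P').
  have vP : v \in P by move: vP'; rewrite inP' => /andP [].
  rewrite vP.
  have -> : \sum_(u in F) w' v * d v u `^ p * xb0 v u =
      w' v * \sum_(u in F) d v u `^ p * rf v u.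
    by rewrite mulr_sumr; apply: eq_bigr => u _; rewrite /xb0 /sel vP' mulrA.
  apply: ler_wpM2l; first exact: w'0.
  by case: (rfP _ vP') => _ _ ->.
case vP: (v \in P) => //.
have wv : w' v = 0 by apply/eqP; move: vP'; rewrite inP' vP /= => /negbFE.
by rewrite big1 // => u _; rewrite wv !mul0r.
Qed.
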